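(* Let $\mathbb{F}$ be a field, $0\neq h\in\mathbb{F}[x]$, and let $A=A_h$ be the unital subalgebra of the Weyl algebra $A_1$ generated by $x$ and $\hat y=yh$. Let $\mathsf{D}_2:A\oplus A\to A$, $\mathsf{D}_2(\alpha,\beta)=[\beta,x]+[\hat y,\alpha]-F_\alpha(h)$. Then: (a) $\operatorname{im}\mathsf{D}_2\subseteq\gcd(h,h')A$; (b) if $\operatorname{char}(\mathbb{F})=0$, then $\operatorname{im}\mathsf{D}_2=\gcd(h,h')A$.
   Context: $A_1$ is generated by $x,y$ with $yx-xy=1$, so $\hat yx-x\hat y=h$ in $A$. $[a,b]=ab-ba$. For $\alpha\in A$, $F_\alpha:\mathbb{F}[x]\to A$ is the linear map with $F_\alpha(x^s)=\sum_{\ell=0}^{s-1}x^\ell\alpha x^{s-\ell-1}$ ($F_\alpha(1)=0$). $h'$ is the derivative of $h$; $\gcd$ monic. *)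

(* Defs.v *)
From HB Require Import structures.
From mathcomp Require Import all_boot all_order all_algebra.
Set Implicit Arguments. Unset Strict Implicit. Unset Printing Implicit Defensive.
Import GRing.Theory.
Local Open Scope ring_scope.

(* The first Weyl algebra A_1 over a field F, generated by x, y with
   yx - xy = 1, represented in its normal-form basis {x^i y^j}:
   an element sum_j f_j(x) y^j is stored as the polynomial in y
   with coefficients f_j in F[x], i.e. as an element of {poly {poly F}}.
   Addition is polynomial addition; multiplication is given by the
   normal-ordering rule  y^i g(x) = sum_k C(i,k) g^(k)(x) y^(i-k). *)
Section Weyl.
Variable F : fieldType.

Definition weyl := {poly {poly F}}.

Definition wmul (p q : weyl) : weyl :=
  \sum_(i < size p) \sum_(j < size q) \sum_(k < i.+1)
     ((p`_i * ((q`_j)^`(k) *+ 'C(i, k)))%:P * 'X^(i + j - k)).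

Definition wpoly (f : {poly F}) : weyl := f%:P.
Definition wone : weyl := wpoly 1.
Definition wx : weyl := wpoly 'X.
Definition wy : weyl := 'X.

Definition wcomm (a b : weyl) : weyl := wmul a b - wmul b a.

Definition yhat (h : {poly F}) : weyl := wmul wy (wpoly h).

Inductive inA (h : {poly F}) : weyl -> Prop :=
  | inA_one : inA h wone
  | inA_x : inA h wx
  | inA_yhat : inA h (yhat h)
  | inA_scale (c : F) a : inA h a -> inA h (wmul (wpoly c%:P) a)
  | inA_add a b : inA h a -> inA h b -> inA h (a + b)
  | inA_mul a b : inA h a -> inA h b -> inA h (wmul a b).

Definition Fmap (alpha : weyl) (f : {poly F}) : weyl :=
  \sum_(s < size f) \sum_(l < s)
     wmul (wpoly (f`_s)%:P)
       (wmul (wmul (wpoly 'X^l) alpha) (wpoly 'X^(s - l - 1))).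

Definition D2 (h : {poly F}) (alpha beta : weyl) : weyl :=
  wcomm beta wx + wcomm (yhat h) alpha - Fmap alpha h.

Definition gcd_hh' (h : {poly F}) : {poly F} :=
  let g := gcdp h h^`() in (lead_coef g)^-1 *: g.

End Weyl.

(* Main.v *)
Require Import Defs.
From mathcomp Require Import all_boot all_order all_algebra.
From mathcomp Require Import ring zify.
Set Implicit Arguments. Unset Strict Implicit. Unset Printing Implicit Defensive.
Import GRing.Theory.
Local Open Scope ring_scope.

Section Basic.
Variable F : fieldType.
Implicit Types (p q n m : weyl F) (c f g : {poly F}).

Definition Dop (n : weyl F) : weyl F := 'X * n + map_poly (@deriv F) n.

Lemma DopD n m : Dop (n + m) = Dop n + Dop m.
Proof. by rewrite /Dop raddfD mulrDr addrACA. Qed.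
Lemma Dop0 : Dop 0 = 0.
Proof. by rewrite /Dop raddf0 mulr0 addr0. Qed.
Lemma DopN n : Dop (- n) = - Dop n.
Proof. by rewrite /Dop raddfN mulrN opprD. Qed.

Lemma iterD i n m : iter i Dop (n + m) = iter i Dop n + iter i Dop m.
Proof. by elim: i => //= i ->; rewrite DopD. Qed.
Lemma iter0 i : iter i Dop 0 = 0.
Proof. by elim: i => //= i ->; rewrite Dop0. Qed.
Lemma iterN i n : iter i Dop (- n) = - iter i Dop n.
Proof. by elim: i => //= i ->; rewrite DopN. Qed.

Lemma Dop_sum (I : Type) (r : seq I) (P : pred I) (E : I -> weyl F) :
  Dop (\sum_(i <- r | P i) E i) = \sum_(i <- r | P i) Dop (E i).
Proof. exact: (big_morph Dop DopD Dop0). Qed.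
Lemma iter_sum k (I : Type) (r : seq I) (P : pred I) (E : I -> weyl F) :
  iter k Dop (\sum_(i <- r | P i) E i) = \sum_(i <- r | P i) iter k Dop (E i).
Proof. exact: (big_morph (iter k Dop) (iterD k) (iter0 k)). Qed.

Lemma Dop_leib c n : Dop (c%:P * n) = c%:P * Dop n + (c^`())%:P * n.
Proof.
rewrite /Dop mulrDr -addrA mulrCA; congr (_ + _).
apply/polyP => i; rewrite coefD !coefCM !coef_map_id0 ?deriv0 //.
by rewrite coefCM derivM addrC.
Qed.

Lemma DopMX n : Dop (n * 'X) = Dop n * 'X.
Proof.
rewrite /Dop mulrDl mulrA; congr (_ + _).
apply/polyP => i; rewrite coefMX !coef_map_id0 ?deriv0 // coefMX.
by case: (i == 0)%N; rewrite ?deriv0.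
Qed.

Lemma DopMXn n j : Dop (n * 'X^j) = Dop n * 'X^j.
Proof.
elim: j n => [|j IH] n; first by rewrite !expr0 !mulr1.
by rewrite exprSr mulrA DopMX IH -mulrA -exprSr.
Qed.

Lemma iterMXn i n j : iter i Dop (n * 'X^j) = iter i Dop n * 'X^j.
Proof. by elim: i => //= i ->; rewrite DopMXn. Qed.

Lemma DopC c : Dop c%:P = 'X * c%:P + (c^`())%:P.
Proof. by rewrite /Dop map_polyC. Qed.

Lemma DopCX (d : {poly F}) (k : nat) : Dop (d%:P * 'X^k) = d%:P * 'X^(k.+1) + (d^`())%:P * 'X^k.
Proof. by rewrite DopMXn DopC mulrDl exprS; congr (_ + _); rewrite mulrCA mulrA. Qed.

Definition Tm i c : weyl F :=
  \sum_(k < i.+1) ((c^`(k) *+ 'C(i, k))%:P * 'X^(i - k)).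

Lemma Tm_step i c : Dop (Tm i c) = Tm i.+1 c.
Proof.
rewrite /Tm Dop_sum.
under eq_bigr => k _ do rewrite DopCX derivMn -derivnS.
rewrite big_split /= [in RHS]big_ord_recl /=.
under [in RHS]eq_bigr => k _ do rewrite binS polyCMn mulrnDr -!polyCMn mulrDl subSS.
rewrite big_split /= addrA; congr (_ + _).
rewrite big_ord_recl /= [in RHS]big_ord_recr /= bin0 subn0 (bin_small (ltnSn i)).
rewrite mulr0n polyC0 mul0r addr0; congr (_ + _).
apply: eq_bigr => k _ /=; rewrite /bump /= add1n.
by rewrite subnSK.
Qed.

Lemma iterC i c : iter i Dop c%:P = Tm i c.
Proof.
elim: i => [|i IH]; first by rewrite /Tm big_ord1 /= bin0 mulr1n subn0 expr0 mulr1.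
by rewrite iterS IH Tm_step.
Qed.


Definition rho p m : weyl F := \sum_(i < size p) (p`_i)%:P * iter i Dop m.

Lemma rho_widen p m k : (size p <= k)%N ->
  rho p m = \sum_(i < k) (p`_i)%:P * iter i Dop m.
Proof.
move=> le; rewrite /rho (big_ord_widen k (fun i => (p`_i)%:P * iter i Dop m)) //.
rewrite big_mkcond; apply: eq_bigr => i _; case: ltnP => // le_p_i.
by rewrite nth_default // polyC0 mul0r.
Qed.

Lemma rhoDl p q m : rho (p + q) m = rho p m + rho q m.
Proof.
set k := maxn (size p) (size q).
rewrite (@rho_widen (p + q) m k) ?size_polyD // (@rho_widen p m k) ?leq_maxl //.
rewrite (@rho_widen q m k) ?leq_maxr // -big_split; apply: eq_bigr => i _.
by rewrite coefD polyCD mulrDl.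
Qed.

Lemma rho0 m : rho 0 m = 0.
Proof. by rewrite /rho size_poly0 big_ord0. Qed.

Lemma rhoNl p m : rho (- p) m = - rho p m.
Proof.
rewrite /rho size_polyN -sumrN; apply: eq_bigr => i _.
by rewrite coefN polyCN mulNr.
Qed.

Lemma rhoDr p m n : rho p (m + n) = rho p m + rho p n.
Proof. by rewrite /rho -big_split; apply: eq_bigr => i _; rewrite iterD mulrDr. Qed.
Lemma rho0r p : rho p 0 = 0.
Proof. by rewrite /rho big1 // => i _; rewrite iter0 mulr0. Qed.
Lemma rhoNr p m : rho p (- m) = - rho p m.
Proof. by rewrite /rho -sumrN; apply: eq_bigr => i _; rewrite iterN mulrN. Qed.

Lemma rhoCl c p m : rho (c%:P * p) m = c%:P * rho p m.
Proof.
rewrite (@rho_widen _ m (size p)); last by rewrite mul_polyC size_scale_leq.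
rewrite /rho mulr_sumr; apply: eq_bigr => i _.
by rewrite coefCM polyCM mulrA.
Qed.

Lemma rhoXl p m : rho ('X * p) m = rho p (Dop m).
Proof.
rewrite (@rho_widen _ m (size p).+1); last first.
  by apply: leq_trans (size_polyMleq _ _) _; rewrite size_polyX.
rewrite big_ord_recl coefXM eqxx polyC0 mul0r add0r /rho.
apply: eq_bigr => i _; rewrite coefXM /=.
by rewrite add0n -iterS iterSr.
Qed.

Lemma rho_map p m : rho (map_poly (@deriv F) p) m =
  \sum_(i < size p) ((p`_i)^`())%:P * iter i Dop m.
Proof.
rewrite (@rho_widen _ m (size p)); last by rewrite /map_poly size_poly.
by apply: eq_bigr => i _; rewrite coef_map_id0 ?deriv0.
Qed.

Lemma Dop_rho p m : Dop (rho p m) = rho p (Dop m) + rho (map_poly (@deriv F) p) m.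
Proof.
rewrite rho_map /rho Dop_sum -big_split; apply: eq_bigr => i _.
by rewrite Dop_leib -iterS iterSr.
Qed.

Lemma rho_Dop p m : rho (Dop p) m = Dop (rho p m).
Proof. by rewrite Dop_rho /Dop rhoDl rhoXl. Qed.

Lemma rho_iter i p m : rho (iter i Dop p) m = iter i Dop (rho p m).
Proof. by elim: i => //= i IH; rewrite rho_Dop IH. Qed.

Lemma rho_sum (I : Type) (r : seq I) (P : pred I) (E : I -> weyl F) m :
  rho (\sum_(i <- r | P i) E i) m = \sum_(i <- r | P i) rho (E i) m.
Proof. exact: (big_morph (fun p => rho p m) (fun p q => rhoDl p q m) (rho0 m)). Qed.

Lemma rho_rho p q m : rho (rho p q) m = rho p (rho q m).
Proof.
rewrite [rho p q]/rho rho_sum [rho p _]/rho; apply: eq_bigr => i _.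
by rewrite rhoCl rho_iter.
Qed.

Lemma rho1 m : rho 1 m = m.
Proof. by rewrite /rho size_poly1 big_ord1 coef1 /= mul1r. Qed.

Lemma iter1 i : iter i Dop 1 = 'X^i.
Proof.
elim: i => [|i IH] //=; rewrite IH /Dop -exprS.
suff -> : map_poly (@deriv F) 'X^i = 0 by rewrite addr0.
apply/polyP => j; rewrite coef_map_id0 ?deriv0 // coefXn coef0.
by case: (j == i); rewrite ?deriv0 // -polyC1 derivC.
Qed.

Lemma rho_r1 p : rho p 1 = p.
Proof.
rewrite /rho; under eq_bigr => i _ do rewrite iter1 mul_polyC.
by rewrite -poly_def coefK.
Qed.

Lemma wmulE p q : wmul p q = rho p q.
Proof.
rewrite /wmul /rho; apply: eq_bigr => i _.
have qE : q = \sum_(j < size q) (q`_j)%:P * 'X^j.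
  by rewrite -[LHS]coefK poly_def; apply: eq_bigr => j _; rewrite mul_polyC.
rewrite [in RHS]qE.
rewrite iter_sum mulr_sumr; apply: eq_bigr => j _.
rewrite iterMXn iterC /Tm mulr_suml mulr_sumr; apply: eq_bigr => k _.
rewrite polyCM -!mulrA -exprD addnBAC //.
by rewrite -ltnS.
Qed.

End Basic.
Section Alg.
Variable F : fieldType.
Implicit Types (p q r : weyl F) (c f g : {poly F}).
Local Notation m := (@wmul F).
Local Notation P := (@wpoly F).

Lemma wmulA p q r : m (m p q) r = m p (m q r).
Proof. by rewrite !wmulE rho_rho. Qed.
Lemma wmulDl p q r : m (p + q) r = m p r + m q r.
Proof. by rewrite !wmulE rhoDl. Qed.
Lemma wmulDr p q r : m p (q + r) = m p q + m p r.
Proof. by rewrite !wmulE rhoDr. Qed.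
Lemma wmulNl p q : m (- p) q = - m p q.
Proof. by rewrite !wmulE rhoNl. Qed.
Lemma wmulNr p q : m p (- q) = - m p q.
Proof. by rewrite !wmulE rhoNr. Qed.
Lemma wmulBl p q r : m (p - q) r = m p r - m q r.
Proof. by rewrite wmulDl wmulNl. Qed.
Lemma wmulBr p q r : m p (q - r) = m p q - m p r.
Proof. by rewrite wmulDr wmulNr. Qed.
Lemma wmul0l q : m 0 q = 0.
Proof. by rewrite wmulE rho0. Qed.
Lemma wmul0r q : m q 0 = 0.
Proof. by rewrite wmulE rho0r. Qed.
Lemma wone1 : wone F = 1.
Proof. by rewrite /wone /wpoly polyC1. Qed.
Lemma wmul1l q : m (wone F) q = q.
Proof. by rewrite wone1 wmulE rho1. Qed.
Lemma wmul1r q : m q (wone F) = q.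
Proof. by rewrite wone1 wmulE rho_r1. Qed.
Lemma wmulPl f q : m (P f) q = f%:P * q.
Proof. by rewrite wmulE /wpoly -[in LHS](mulr1 f%:P) rhoCl rho1. Qed.
Lemma wmulPP f g : m (P f) (P g) = P (f * g).
Proof. by rewrite wmulPl /wpoly polyCM. Qed.
Lemma wmulPC f g : m (P f) (P g) = m (P g) (P f).
Proof. by rewrite !wmulPP mulrC. Qed.
Lemma wmul_y q : m (wy F) q = Dop q.
Proof. by rewrite wmulE /wy -[in LHS](mulr1 'X) rhoXl rho1. Qed.
Lemma wmulMnr p q k : m p (q *+ k) = m p q *+ k.
Proof. by elim: k => [|k IH]; rewrite ?wmul0r // !mulrS wmulDr IH. Qed.
Lemma wmulMnl p q k : m (p *+ k) q = m p q *+ k.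
Proof. by elim: k => [|k IH]; rewrite ?wmul0l // !mulrS wmulDl IH. Qed.

Lemma comm_Y_P h f : wcomm (yhat h) (P f) = P (h * f^`()).
Proof.
rewrite /wcomm /yhat wmulA wmulPP !wmul_y !DopC wmulPl /wpoly.
rewrite derivM !polyCM polyCD polyCM; ring.
Qed.

Lemma mulP_comm f p q : m (P f) (m p q) = m p (m (P f) q) ->
  True.
Proof. by []. Qed.

Lemma wcomm_mull p q r : wcomm (m p q) r = m p (wcomm q r) + m (wcomm p r) q.
Proof.
rewrite /wcomm wmulBr wmulBl !wmulA.
ring.
Qed.

Lemma wcomm_mulr p q r : wcomm r (m p q) = m p (wcomm r q) + m (wcomm r p) q.
Proof.
rewrite /wcomm wmulBr wmulBl !wmulA.
ring.
Qed.

End Alg.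
Section WithH.
Variable F : fieldType.
Variable h : {poly F}.
Implicit Types (p q r w a b : weyl F) (c f g : {poly F}).
Local Notation m := (@wmul F).
Local Notation P := (@wpoly F).
Local Notation A := (inA h).
Local Notation Y := (yhat h).
Local Notation x := (wx F).

Lemma inA0 : A 0.
Proof.
have := inA_scale 0 (inA_one h).
by rewrite wmulPl /wpoly !polyC0 mul0r.
Qed.

Lemma inA_P f : A (P f).
Proof.
elim/poly_ind: f => [|f c IH]; first by rewrite /wpoly polyC0; exact: inA0.
have -> : P (f * 'X + c%:P) = m (P f) x + m (P c%:P) (wone F).
  by rewrite wmulPP wmul1r /wpoly polyCD.
exact: inA_add (inA_mul IH (inA_x h)) (inA_scale c (inA_one h)).
Qed.

Lemma inA_opp a : A a -> A (- a).
Proof.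
move=> Ha; have := inA_scale (-1) Ha.
by rewrite wmulPl polyCN polyC1 polyCN polyC1 mulN1r.
Qed.

Lemma inA_sub a b : A a -> A b -> A (a - b).
Proof. by move=> Ha Hb; apply: inA_add Ha (inA_opp Hb). Qed.

Lemma inA_Pm f a : A a -> A (m (P f) a).
Proof. by move=> Ha; apply: inA_mul (inA_P f) Ha. Qed.

Definition Jm w := exists a, A a /\ w = m (P h) a.

Lemma Jm0 : Jm 0.
Proof. by exists 0; split; [exact: inA0 | rewrite wmul0r]. Qed.
Lemma JmD w1 w2 : Jm w1 -> Jm w2 -> Jm (w1 + w2).
Proof.
by move=> [a1 [H1 ->]] [a2 [H2 ->]]; exists (a1 + a2); split; [exact: inA_add | rewrite wmulDr].
Qed.
Lemma JmN w : Jm w -> Jm (- w).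
Proof. by move=> [a1 [H1 ->]]; exists (- a1); split; [exact: inA_opp | rewrite wmulNr]. Qed.
Lemma JmB w1 w2 : Jm w1 -> Jm w2 -> Jm (w1 - w2).
Proof. by move=> H1 H2; apply: JmD H1 (JmN H2). Qed.
Lemma Jm_mulr w b : Jm w -> A b -> Jm (m w b).
Proof.
by move=> [a1 [H1 ->]] Hb; exists (m a1 b); split; [exact: inA_mul | rewrite wmulA].
Qed.
Lemma JmP f : Jm (m (P h) (P f)).
Proof. by exists (P f); split => //; exact: inA_P. Qed.

Lemma Y_P f : m Y (P f) = m (P f) Y + m (P h) (P f^`()).
Proof. by rewrite wmulPP -comm_Y_P /wcomm addrC subrK. Qed.

Lemma Y_Ph w : m Y (m (P h) w) = m (P h) (m Y w + m (P h^`()) w).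
Proof. by rewrite -wmulA Y_P wmulDl !wmulA wmulDr. Qed.

Lemma P_Ph f w : m (P f) (m (P h) w) = m (P h) (m (P f) w).
Proof. by rewrite -!wmulA wmulPC. Qed.

Lemma Jm_mull b : A b -> forall w, Jm w -> Jm (m b w).
Proof.
elim=> {b} [|||c b Hb IH|b1 b2 H1 IH1 H2 IH2|b1 b2 H1 IH1 H2 IH2] w [a [Ha ->]].
- by rewrite wmul1l; exists a.
- by rewrite /wx P_Ph; exists (m (P 'X) a); split => //; exact: inA_Pm.
- rewrite Y_Ph; exists (m Y a + m (P h^`()) a); split => //.
  by apply: inA_add; [exact: inA_mul (inA_yhat h) Ha | exact: inA_Pm].
- rewrite wmulA; have [a1 [Ha1 ->]] : Jm (m b (m (P h) a)) by apply: IH; exists a.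
  by rewrite P_Ph; exists (m (P c%:P) a1); split => //; exact: inA_Pm.
- by rewrite wmulDl; apply: JmD; [apply: IH1 | apply: IH2]; exists a.
- by rewrite wmulA; apply: IH1; apply: IH2; exists a.
Qed.

Lemma wcommDl p q r : wcomm (p + q) r = wcomm p r + wcomm q r.
Proof. rewrite /wcomm wmulDl wmulDr; ring. Qed.
Lemma wcommDr p q r : wcomm r (p + q) = wcomm r p + wcomm r q.
Proof. rewrite /wcomm wmulDl wmulDr; ring. Qed.
Lemma wcommPP f g : wcomm (P f) (P g) = 0.
Proof. by rewrite /wcomm wmulPC subrr. Qed.

Lemma comm_P b : A b -> forall f, Jm (wcomm b (P f)).
Proof.
elim=> {b} [|||c b Hb IH|b1 b2 H1 IH1 H2 IH2|b1 b2 H1 IH1 H2 IH2] f.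
- by rewrite /wcomm wmul1l wmul1r subrr; exact: Jm0.
- by rewrite /wx wcommPP; exact: Jm0.
- by rewrite comm_Y_P -wmulPP; exact: JmP.
- rewrite wcomm_mull wcommPP wmul0l addr0.
  exact: (Jm_mull (inA_P c%:P) (IH f)).
- by rewrite wcommDl; apply: JmD.
- rewrite wcomm_mull; apply: JmD; first exact: Jm_mull.
  exact: Jm_mulr.
Qed.

Lemma comm_Y b : A b -> Jm (wcomm Y b).
Proof.
have JY f : Jm (wcomm Y (P f)) by rewrite comm_Y_P -wmulPP; exact: JmP.
elim=> {b} [|||c b Hb IH|b1 b2 H1 IH1 H2 IH2|b1 b2 H1 IH1 H2 IH2].
- by rewrite /wcomm wmul1l wmul1r subrr; exact: Jm0.
- exact: JY.
- by rewrite /wcomm subrr; exact: Jm0.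
- rewrite wcomm_mulr; apply: JmD; first exact: (Jm_mull (inA_P c%:P) IH).
  exact: Jm_mulr.
- by rewrite wcommDr; apply: JmD.
- rewrite wcomm_mulr; apply: JmD; first exact: Jm_mull.
  exact: Jm_mulr.
Qed.

Lemma Jm_sum (I : Type) (r : seq I) (Q : pred I) (E : I -> weyl F) :
  (forall i, Q i -> Jm (E i)) -> Jm (\sum_(i <- r | Q i) E i).
Proof. by move=> H; apply: (big_ind Jm Jm0 JmD). Qed.

Lemma wmul_suml (I : Type) (r : seq I) (Q : pred I) (E : I -> weyl F) q :
  m (\sum_(i <- r | Q i) E i) q = \sum_(i <- r | Q i) m (E i) q.
Proof. exact: (big_morph (fun p => m p q) (fun p1 p2 => wmulDl p1 p2 q) (wmul0l q)). Qed.

Lemma P_sum (I : Type) (r : seq I) (Q : pred I) (E : I -> {poly F}) :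
  P (\sum_(i <- r | Q i) E i) = \sum_(i <- r | Q i) P (E i).
Proof.
elim: r => [|i r IH]; first by rewrite !big_nil /wpoly polyC0.
by rewrite !big_cons; case: (Q i); rewrite // /wpoly polyCD -IH.
Qed.

Lemma deriv_expand f :
  \sum_(s < size f) \sum_(l < s) ((f`_s)%:P * 'X^(s.-1)) = f^`().
Proof.
have fE : f = \sum_(s < size f) f`_s *: 'X^s by rewrite -[LHS]coefK poly_def.
rewrite [in RHS]fE raddf_sum; apply: eq_bigr => s _.
change (\sum_(l < s) (f`_s)%:P * 'X^(s.-1) = deriv (f`_s *: 'X^s)).
by rewrite sumr_const card_ord derivZ derivXn mul_polyC -scalerMnr.
Qed.

Lemma Fmap_term c l k b : A b ->
  Jm (m (P c) (m (m (P 'X^l) b) (P 'X^k)) - m (P (c * 'X^(l + k))) b).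
Proof.
move=> Hb; rewrite [m (m _ b) _]wmulA.
have -> : m b (P 'X^k) = m (P 'X^k) b + wcomm b (P 'X^k) by rewrite /wcomm addrC subrK.
rewrite wmulDr wmulDr -!wmulA !wmulPP -mulrA -exprD.
rewrite addrC addKr.
exact: (Jm_mull (inA_P _) (comm_P Hb _)).
Qed.

Lemma Fmap_J b : A b -> Jm (Fmap b h - m (P h^`()) b).
Proof.
move=> Hb.
rewrite -deriv_expand P_sum wmul_suml /Fmap -sumrB; apply: Jm_sum => s _.
rewrite P_sum wmul_suml -sumrB; apply: Jm_sum => l _.
have -> : (s.-1 = l + (s - l - 1))%N by have := ltn_ord l; lia.
by apply: Fmap_term.
Qed.

End WithH.
Section PartA.
Variable F : fieldType.
Variable h : {poly F}.
Hypothesis hnz : h != 0.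
Implicit Types (p q r w a b : weyl F) (c f g : {poly F}).
Local Notation m := (@wmul F).
Local Notation P := (@wpoly F).
Local Notation A := (inA h).
Local Notation Y := (yhat h).

Lemma gcd_dvd : gcd_hh' h %| h /\ gcd_hh' h %| h^`().
Proof.
have g0nz : gcdp h h^`() != 0 by rewrite gcdp_eq0 negb_and hnz.
have lnz : (lead_coef (gcdp h h^`()))^-1 != 0 by rewrite invr_eq0 lead_coef_eq0.
by rewrite /gcd_hh' !dvdpZl // dvdp_gcdl dvdp_gcdr.
Qed.

Lemma Pdecomp f : gcd_hh' h %| f -> forall w,
  m (P f) w = m (P (gcd_hh' h)) (m (P (f %/ gcd_hh' h)) w).
Proof. by move=> d w; rewrite -wmulA wmulPP mulrC divpK. Qed.

Lemma JtoG w : Jm h w -> exists a, A a /\ w = m (P (gcd_hh' h)) a.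
Proof.
move=> [a [Ha ->]]; exists (m (P (h %/ gcd_hh' h)) a); split; first exact: inA_Pm.
by rewrite -Pdecomp //; case: gcd_dvd.
Qed.

Lemma partA alpha beta : A alpha -> A beta ->
  exists a, A a /\ D2 h alpha beta = m (P (gcd_hh' h)) a.
Proof.
move=> Ha Hb.
have J := JmB (JmD (comm_P Hb 'X) (comm_Y Ha)) (Fmap_J Ha).
have [a1 [Ha1 E1]] := JtoG J.
exists (a1 - m (P (h^`() %/ gcd_hh' h)) alpha); split.
  by apply: inA_sub => //; exact: inA_Pm.
rewrite wmulBr -E1 -Pdecomp; last by case: gcd_dvd.
rewrite /D2 /wx; ring.
Qed.

End PartA.
Section PartB.
Variable F : fieldType.
Variable h : {poly F}.
Implicit Types (p q r w a b : weyl F) (c f g : {poly F}).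
Local Notation m := (@wmul F).
Local Notation P := (@wpoly F).
Local Notation A := (inA h).
Local Notation Y := (yhat h).
Local Notation x := (wx F).

Definition Im w := exists b, A b /\ wcomm b x = w.

Lemma Im0 : Im 0.
Proof. by exists 0; split; [exact: inA0 | rewrite /wcomm wmul0l wmul0r subrr]. Qed.
Lemma ImD w1 w2 : Im w1 -> Im w2 -> Im (w1 + w2).
Proof. by move=> [b1 [H1 <-]] [b2 [H2 <-]]; exists (b1 + b2); split; [exact: inA_add | rewrite wcommDl]. Qed.
Lemma ImN w : Im w -> Im (- w).
Proof.
move=> [b1 [H1 <-]]; exists (- b1); split; first exact: inA_opp.
by rewrite /wcomm wmulNl wmulNr opprB opprK addrC.
Qed.
Lemma ImB w1 w2 : Im w1 -> Im w2 -> Im (w1 - w2).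
Proof. by move=> H1 H2; apply: ImD H1 (ImN H2). Qed.

Lemma wcomm_Px f b : wcomm (m (P f) b) x = m (P f) (wcomm b x).
Proof. by rewrite wcomm_mull /wx wcommPP wmul0l addr0. Qed.

Lemma ImP f w : Im w -> Im (m (P f) w).
Proof. by move=> [b [H <-]]; exists (m (P f) b); split; [exact: inA_Pm | rewrite wcomm_Px]. Qed.

Definition Yp k := iter k (m Y) (wone F).

Lemma inA_Yp k : A (Yp k).
Proof. by elim: k => [|k IH] /=; [exact: inA_one | exact: inA_mul (inA_yhat h) IH]. Qed.

Inductive Sb (n : nat) : weyl F -> Prop :=
  | Sb0 : Sb n 0
  | SbM f k : (k < n)%N -> Sb n (m (P f) (Yp k))
  | SbD a b : Sb n a -> Sb n b -> Sb n (a + b).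

Lemma Sb_mono n n' w : (n <= n')%N -> Sb n w -> Sb n' w.
Proof.
move=> le; elim=> [|f k lt|a b _ Ha _ Hb]; first exact: Sb0.
  by apply: SbM; apply: leq_trans le.
exact: SbD.
Qed.

Lemma Sb_P n f w : Sb n w -> Sb n (m (P f) w).
Proof.
elim=> [|g k lt|a b _ Ha _ Hb]; first by rewrite wmul0r; exact: Sb0.
  by rewrite -wmulA wmulPP; exact: SbM.
by rewrite wmulDr; exact: SbD.
Qed.

Lemma Sb_Mn n k w : Sb n w -> Sb n (w *+ k).
Proof. by move=> H; elim: k => [|k IH]; [exact: Sb0 | rewrite mulrS; exact: SbD]. Qed.

Lemma Sb_Y n w : Sb n w -> Sb n.+1 (m Y w).
Proof.
elim=> [|g k lt|a b _ Ha _ Hb]; first by rewrite wmul0r; exact: Sb0.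
  rewrite -wmulA Y_P wmulDl wmulPP [m (m (P g) Y) _]wmulA; apply: SbD.
    by apply: (SbM g (k := k.+1)).
  by apply: SbM; apply: ltn_trans lt _.
by rewrite wmulDr; exact: SbD.
Qed.

Lemma A_S a : A a -> exists n, Sb n a.
Proof.
have key : forall b, A b -> forall n w, Sb n w -> exists n', Sb n' (m b w).
  move=> b; elim=> {b} [|||c b Hb IH|b1 b2 H1 IH1 H2 IH2|b1 b2 H1 IH1 H2 IH2] n w Hw.
  - by exists n; rewrite wmul1l.
  - by exists n; apply: Sb_P.
  - by exists n.+1; apply: Sb_Y.
  - have [n1 H] := IH n w Hw; exists n1; rewrite wmulA; exact: Sb_P.
  - have [n1 G1] := IH1 n w Hw; have [n2 G2] := IH2 n w Hw.
    exists (maxn n1 n2); rewrite wmulDl; apply: SbD.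
      by apply: Sb_mono G1; apply: leq_maxl.
    by apply: Sb_mono G2; apply: leq_maxr.
  - have [n1 G1] := IH2 n w Hw; have [n2 G2] := IH1 n1 _ G1.
    by exists n2; rewrite wmulA.
move=> Ha; have S1 : Sb 1 (wone F).
  by have := SbM 1 (k := 0) (ltnSn 0); rewrite /Yp /= wmul1l.
by have [n Hn] := key a Ha 1 _ S1; exists n; rewrite wmul1r in Hn.
Qed.

Lemma comm_Yx : wcomm Y x = P h.
Proof. by rewrite /wx comm_Y_P derivX mulr1. Qed.

Lemma Kform n : exists r, Sb n r /\
  wcomm (Yp n.+1) x = m (P h) (Yp n) *+ n.+1 + m (P h) r.
Proof.
elim: n => [|n [r [Sr E]]].
  exists 0; split; first exact: Sb0.
  by rewrite /Yp /= wmul1r comm_Yx wmul0r addr0 wmul1r.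
exists (m (P h^`()) (Yp n) *+ n.+1 + m Y r + m (P h^`()) r); split.
  apply: SbD; first apply: SbD.
  - by apply: Sb_Mn; apply: SbM; apply: ltnSn.
  - exact: Sb_Y.
  - by apply: Sb_P; apply: Sb_mono Sr.
have -> : Yp n.+2 = m Y (Yp n.+1) by [].
rewrite wcomm_mull comm_Yx E wmulDr wmulMnr !Y_Ph.
have -> : m Y (Yp n) = Yp n.+1 by [].
rewrite !wmulDr wmulMnr mulrnDl.
rewrite (mulrS _ n.+1); ring.
Qed.


Hypothesis char0 : [pchar F] =i pred0.

Lemma nzk k : ((k.+1)%:R : F) != 0.
Proof. by have := (pcharf0P F).1 char0 k.+1 => ->. Qed.

Lemma Im_inv w k : Im (w *+ k.+1) -> Im w.
Proof.
move=> H; have := ImP (((k.+1)%:R : F)^-1)%:P H.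
rewrite wmulMnr wmulPl -mulrnAl -!polyCMn.
have -> : ((k.+1)%:R : F)^-1 *+ k.+1 = 1.
  by rewrite -(mulr_natr (((k.+1)%:R : F)^-1)) mulVf // nzk.
by rewrite !polyC1 mul1r.
Qed.
Lemma surj n w : Sb n w -> Im (m (P h) w).
Proof.
elim: n w => [|n IHn] w.
  elim=> [|f k lt|a b _ Ha _ Hb]; first by rewrite wmul0r; exact: Im0.
    by rewrite ltn0 in lt.
  by rewrite wmulDr; apply: ImD.
elim=> [|f k lt|a b _ Ha _ Hb]; first by rewrite wmul0r; exact: Im0.
  move: lt; rewrite ltnS leq_eqVlt => /orP [/eqP -> | lt].
    have [r [Sr E]] := Kform n.
    have H1 : Im (wcomm (m (P f) (Yp n.+1)) x).
      by exists (m (P f) (Yp n.+1)); split => //; exact: inA_Pm (inA_Yp _).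
    rewrite wcomm_Px E wmulDr wmulMnr !(@P_Ph F h f) in H1.
    apply: (@Im_inv _ n).
    by have := ImB H1 (IHn _ (Sb_P f Sr)); rewrite addrK.
  by apply: IHn; apply: SbM.
by rewrite wmulDr; apply: ImD.
Qed.

Lemma Jm_Im w : Jm h w -> Im w.
Proof. by move=> [a [Ha ->]]; have [n Hn] := A_S Ha; exact: surj Hn. Qed.
End PartB.

Unset Implicit Arguments.

Theorem proposition3p3 (F : fieldType) (h : {poly F}) (hnz : h != 0) :
  (* (a) im D_2 is contained in gcd(h,h') A *)
  (forall alpha beta : weyl F, inA h alpha -> inA h beta ->
     exists a : weyl F, inA h a /\ D2 h alpha beta = wmul (wpoly (gcd_hh' h)) a)
  /\
  (* (b) in characteristic 0, im D_2 = gcd(h,h') A *)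
  ([pchar F] =i pred0 ->
   forall a : weyl F, inA h a ->
     exists alpha beta : weyl F, inA h alpha /\ inA h beta /\
       D2 h alpha beta = wmul (wpoly (gcd_hh' h)) a).
Proof.
split; first exact: (@partA F h hnz).
move=> char0 a Ha.
have [[u0 v0] /= Hb] := Bezoutp h h^`().
have [[c1 c2] /= /andP [c1nz c2nz] Hc] := eqpP _ _ Hb.
set k := (lead_coef (gcdp h h^`()))^-1 * (c2^-1 * c1).
have HG : gcdp h h^`() = (c2^-1 * c1) *: (u0 * h + v0 * h^`()).
  by rewrite -scalerA Hc scalerA mulVf // scale1r.
have Ebez : (k *: u0) * h + (k *: v0) * h^`() = gcd_hh' h.
  rewrite /gcd_hh' /= {2}HG scalerA -/k.
  by rewrite scalerDr !scalerAl.
set u := k *: u0; set v := k *: v0.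
set al := - wmul (wpoly v) a.
have Hal : inA h al by apply: inA_opp; apply: inA_Pm.
set w := wmul (wpoly (u * h)) a -
  (wcomm (yhat h) al - (Fmap al h - wmul (wpoly h^`()) al)).
have Jw : Jm h w.
  apply: JmB; last exact: JmB (comm_Y Hal) (Fmap_J Hal).
  exists (wmul (wpoly u) a); split; first exact: inA_Pm.
  by rewrite -wmulA wmulPP mulrC.
have [be [Hbe Ebe]] := @Jm_Im F h char0 _ Jw.
exists al, be; split => //; split => //.
have PD f g : wpoly (f + g) = wpoly f + wpoly g by rewrite /wpoly polyCD.
rewrite /D2 Ebe /w -Ebez PD wmulDl /al wmulNr -wmulA wmulPP (mulrC h^`()).
ring.
Qed.
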